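(* Let $\sigma$ be a uniform substitution, $\alpha$ a program, $U\subseteq\mathcal V\cup\Omega$, $I$ an interpretation and $w$ a state. Suppose $\sigma^{U,\emptyset}(\alpha)$ is defined with output taboo $V$, $v$ is a $U$-variation of $w$, and $(v,\tau,o)\in[\![\alpha]\!]^{\sigma^*_wI}$ with $o\neq\bot$. Then $o\cdot\tau$ is a $V$-variation of $w$.
   Context: Setting (dLCHP). Variables and channels. Variables are $\mathcal V=\mathcal V_{\mathbb R}\cup\mathcal V_{\mathbb N}\cup\mathcal V_{\mathcal T}$ (real, integer and trace variables). Each $x\in\mathcal V_{\mathbb R}$ has a differential symbol $x'\in\mathcal V_{\mathbb R}$. The variable $\mu\in\mathcal V_{\mathbb R}$ is the designated global time. $\Omega$ is the set of channel names. All channel sets and variable sets occurring in the syntax are finite or cofinite. $S^\complement$ denotes the complement of $S$. Syntax of terms. Terms have four sorts: - real terms $\theta::=x\mid f(\bar{ch},\bar e)\mid\theta_1+\theta_2\mid\theta_1\cdot\theta_2\mid(\eta)'\mid\mathrm{val}(te)\mid\mathrm{time}(te)$; - integer terms $\iota::=n\mid f(\bar{ch},\bar e)\mid\iota_1+\iota_2\mid|te|$; - channel terms $f(\bar{ch},\bar e)\mid\mathrm{chan}(te)$; - trace terms $te::=h\mid f(\bar{ch},\bar e)\mid\langle ch,\eta_1,\eta_2\rangle\mid te_1\cdot te_2\mid te\downarrow C\mid te[\iota]$. Here $\eta,\eta_i$ are polynomials with rational coefficients in real variables. $f(\bar{ch},\bar e)$ is a function symbol (including constants) annotated with a channel set $\bar{ch}\subseteq\Omega$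 and applied to terms $\bar e$. Operators such as $+,\cdot,\downarrow C$ are built-in. Syntax of programs. $\alpha,\beta::=a^{\bar z}_{\bar{ch}}\mid x:=\eta\mid x:=*\mid ?\chi\mid\{x'=\eta\,\&\,\chi\}\mid\alpha;\beta\mid\alpha\cup\beta\mid\alpha^*\mid ch(h)!\eta\mid ch(h)?x\mid\alpha\parallel\beta$. Here $\chi$ is a first-order real-arithmetic formula. $a^{\bar z}_{\bar{ch}}$ is a program constant allowed to write only channels in $\bar{ch}$ and to bind only variables in $\bar z\subseteq\mathcal V_{\mathbb R}\cup\mathcal V_{\mathcal T}$. Syntax of formulas. $\phi,\psi,A,C::=e_1\sim e_2\mid p(\bar{ch},\bar e)\mid\neg\phi\mid\phi\wedge\psi\mid\forall z\,\phi\mid[\alpha]\psi\mid[\alpha]\{A,C\}\psi$. Here $\sim$ ranges over $=$, $\ge$ and trace prefix $\preceq$, and $p$ is a predicate symbol. Well-formedness (context-sensitive syntax). In every $\alpha\parallel\beta$ we require $BV(\alpha)\cap BV(\beta)\subseteq\{\mu,\mu'\}\cup\mathcal V_{\mathcal T}$. In every $[\alpha]\{A,C\}\psi$ we require $(FV(A)\cup FV(C))\cap BV(\alpha)\subseteq\mathcal V_{\mathcal T}$. Traces and states. - A trace is a finite sequence of events $\langle ch,d,s\rangle$ with $ch\in\Omega$, $d\in\mathbb R$ (value) and $s\in\mathbb R$ (timestamp), with strictly increasing timestamps. - A recorded trace additionally tags each event with a trace variable $h$. - $\epsilon$ is the empty trace; $\preceq$ is prefix and $\prec$ is strict prefix.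 - A state $v$ maps each variable to a value of its type (real, natural number or trace). $v[z\mapsto d]$ is the modified state. - $v\cdot\tau$ (for a recorded trace $\tau$) appends to each $v(h)$ the subsequence of untagged events of $\tau$ tagged with $h$. - $\tau\downarrow C$ is the subsequence of events whose channel lies in $C$. - $v\downarrow C$ replaces $v(h)$ by $v(h)\downarrow C$ for every $h\in\mathcal V_{\mathcal T}$. - ''$v=u$ on $S$'' means that $v$ and $u$ agree on every variable in $S$. Computations. A computation is $(v,\tau,w)$ where $v$ is a state, $\tau$ a recorded trace, and $w$ a state or $\bot$ (unfinished). The prefix order on computation outcomes is: $(\tau',w')\preceq(\tau,w)$ iff either ($w'=\bot$ and $\tau'\preceq\tau$) or $(\tau',w')=(\tau,w)$. Interpretations. An interpretation $I$ assigns: - to function symbols, functions of matching sorts (smooth in real arguments if real-valued); - to predicate symbols, relations; - to each program constant $a^{\bar z}_{\bar{ch}}$, a prefix-closed set of chronological computations that contains all $(v,\epsilon,\bot)$, such that each $(v,\tau,w)$ in it satisfies $\tau\downarrow\bar{ch}^\complement=\epsilon$, $v=w$ on $\mathcal V_{\mathcal T}$, and $w\cdot\tau=v$ on $\bar z^\complement$. Term semantics. - Variables: $Iv[\![z]\!]=v(z)$. - Function symbols: $Iv[\![f(\bar{ch},e_1,\dots,e_k)]\!]=I(f)(I\tilde v[\![e_1]\!],\dots,I\tilde v[\![e_k]\!])$ where $\tilde v=v\downarrow\bar{ch}$. - Built-ins are evaluated pointwise. - Differentials: $Iv[\![(\eta)']\!]=\sum_x v(x')\,\partial Iv[\![\eta]\!]/\partial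 x$. Program semantics $[\![\alpha]\!]^I$. Let $\Lambda=\{(v,\epsilon,\bot)\}$ (all states $v$). - $[\![a^{\bar z}_{\bar{ch}}]\!]^I=I(a^{\bar z}_{\bar{ch}})$. - $x:=\eta$ gives $\Lambda\cup\{(v,\epsilon,v[x\mapsto Iv[\![\eta]\!]])\}$. - $x:=*$ gives $\Lambda\cup\{(v,\epsilon,v[x\mapsto d]):d\in\mathbb R\}$. - $?\chi$ gives $\Lambda\cup\{(v,\epsilon,v):I,v\models\chi\}$. - $\{x'=\eta\&\chi\}$ gives $\Lambda$ together with all $(v,\epsilon,\varphi(s))$ for solutions $\varphi:[0,s]\to$ states of $\mu'=1,x'=\eta$ that satisfy $\chi$ throughout, keep all variables other than $x,x',\mu,\mu'$ constant, and have $\varphi(0)=v$ except on $\{x',\mu'\}$. - $ch(h)!\eta$ gives all $(v,\tau,w)$ with $(\tau,w)\preceq(\langle h,ch,Iv[\![\eta]\!],v(\mu)\rangle,v)$. - $ch(h)?x$ gives all $(v,\tau,w)$ with $(\tau,w)\preceq(\langle h,ch,d,v(\mu)\rangle,v[x\mapsto d])$ for some $d\in\mathbb R$. - $\alpha\cup\beta$ is the union of the two semantics. - $\alpha;\beta$ is $\{(v,\tau,\bot):(v,\tau,w)\in[\![\alpha]\!]^I\}\cup\{(v,\tau_1\tau_2,w):(v,\tau_1,u)\in[\![\alpha]\!]^I,(u,\tau_2,w)\in[\![\beta]\!]^I\}$. - $\alpha^*$ is $\bigcup_n[\![\alpha^n]\!]^I$ with $\alpha^0=?\mathit{true}$. -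 $\alpha_1\parallel\alpha_2$ gives all $(v,\tau,w_1\oplus w_2)$ such that: $(v,\tau\downarrow\alpha_j,w_j)\in[\![\alpha_j]\!]^I$ for $j=1,2$, where $\tau\downarrow\alpha_j$ is the projection onto the communication of $\alpha_j$; the final global times of $w_1$ and $w_2$ agree; and $\tau$ contains only communication of $\alpha_1$ or $\alpha_2$. Here $w_1\oplus w_2$ is $\bot$ if either is $\bot$, and otherwise equals $w_1$ on $BV(\alpha_1)$ and $w_2$ elsewhere. Formula semantics. - $I,v\models e_1\sim e_2$ iff the values are related by $\sim$. - $I,v\models p(\bar{ch},\bar e)$ iff $(I\tilde v[\![\bar e]\!])\in I(p)$ with $\tilde v=v\downarrow\bar{ch}$. - $\neg$ and $\wedge$ are classical. - $\forall z\phi$ quantifies over all values of the type of $z$. - $I,v\models[\alpha]\psi$ iff $I,w\cdot\tau\models\psi$ for all $(v,\tau,w)\in[\![\alpha]\!]^I$ with $w\ne\bot$. - $I,v\models[\alpha]\{A,C\}\psi$ iff for all $(v,\tau,w)\in[\![\alpha]\!]^I$ both hold: - (commit) if $I,v\cdot\sigma\models A$ for all $\sigma\prec\tau$, then $I,v\cdot\tau\models C$; - (post) if $I,v\cdot\sigma\models A$ for all $\sigma\preceq\tau$ and $w\neq\bot$, then $I,w\cdot\tau\models\psi$. Static semantics. Formulas are treated as truth-valued expressions. - $FV(e)$ (for a term or formula $e$) is the set of $z\in\mathcal V$ such that some $I,v,\tilde v$ with $v=\tilde v$ on $\{z\}^\complement$ give different values of $e$. - $CN(e)$ is the set of $ch\in\Omega$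 such that some $I,v,\tilde v$ with $v\downarrow\{ch\}^\complement=\tilde v\downarrow\{ch\}^\complement$ give different values of $e$. - For a program $\alpha$, $FV(\alpha)$ is the set of $z$ for which there exist $I,v,\tilde v,\tau,w$ with $v=\tilde v$ on $\{z\}^\complement$ and $(v,\tau,w)\in[\![\alpha]\!]^I$, but no $(\tilde v,\tau,\tilde w)\in[\![\alpha]\!]^I$ with $\tilde w=w$ on $\{z\}^\complement$ (in particular $\tilde w=\bot$ iff $w=\bot$). - $BV(\alpha)$ is the set of $z$ such that some $I$ and $(v,\tau,w)\in[\![\alpha]\!]^I$ with $w\ne\bot$ satisfy $(w\cdot\tau)(z)\ne v(z)$. - $CN(\alpha)$ is the set of $ch$ such that some $I$ and $(v,\tau,w)\in[\![\alpha]\!]^I$ satisfy $\tau\downarrow\{ch\}\neq\epsilon$. - $V(\alpha)=FV(\alpha)\cup BV(\alpha)$. Uniform substitution. A uniform substitution $\sigma$ maps: - function symbols $f$ to terms $\sigma f(\cdot)$ of the same sort, in which the reserved nullary symbol $\cdot$ marks the argument position (symbols only usable inside programs are mapped to polynomials); - predicate symbols $p$ to formulas $\sigma p(\cdot)$ (those used in program tests are mapped to first-order real arithmetic); - program constants $a$ to programs $\sigma a$. All other symbols are left unchanged. The application is a partial operation; whenever a side condition fails, the result is undefined (''clash''), and undefinedness propagates. Terms and formulas, with taboo set $U\subseteq\mathcal V\cup\Omega$: - $\sigma^U(z)=z$ for variables $z$. - $\sigma^U(f(\bar{ch},e))$ is the result of replacing $\cdot$ in $\sigma f(\cdot)$ by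 $\sigma^U(e\downarrow\bar{ch})$. This is defined only if $(FV(\sigma f(\cdot))\cup CN(\sigma f(\cdot)))\cap U=\emptyset$. Here $e\downarrow\bar{ch}$ pushes the projection onto $\bar{ch}$ into $e$, e.g. $q(\bar{ch}_0,e')\downarrow\bar{ch}=q(\bar{ch}_0\cap\bar{ch},e')$. - $\sigma^U$ is homomorphic on built-in operators, on $\sim$, on $\neg$ and on $\wedge$. - $\sigma^U((\eta)')=(\sigma^{\mathcal V\cup\Omega}(\eta))'$. - $\sigma^U(p(\bar{ch},e))$ is analogous to the function symbol case. - $\sigma^U(\forall z\phi)=\forall z\,\sigma^{U\cup\{z\}}(\phi)$. - $\sigma^U([\alpha]\psi)=[\sigma^{U,\emptyset}(\alpha)]\sigma^V(\psi)$ and $\sigma^U([\alpha]\{A,C\}\psi)=[\sigma^{U,\emptyset}(\alpha)]\{\sigma^V(A),\sigma^V(C)\}\sigma^V(\psi)$, where $V$ is the output taboo of $\sigma^{U,\emptyset}(\alpha)$. Programs, with input taboo $U$ and parallel context $\Pi\subseteq\mathcal V$, yielding a result $\sigma^{U,\Pi}(\alpha)$ and an output taboo $V$: - $a^{\bar z}_{\bar{ch}}$: result $\sigma a$, output $U\cup BV(\sigma a)\cup CN(\sigma a)$; defined only if $BV(\sigma a)\subseteq\bar z$ and $CN(\sigma a)\subseteq\bar{ch}$. - $x:=\eta$: result $x:=\sigma^{U\cup\Pi}(\eta)$, output $U\cup\{x\}$. - $x:=*$: result unchanged, output $U\cup\{x\}$. - $?\chi$: result $?\sigma^{U\cup\Pi}(\chi)$,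 output $U$. - $\{x'=\eta\&\chi\}$: result $\{x'=\sigma^{U\cup\Pi}(\eta)\&\sigma^{U\cup\Pi}(\chi)\}$, output $U\cup\{x,x',\mu,\mu'\}$. - $ch(h)!\eta$: result $ch(h)!\sigma^{U\cup\Pi}(\eta)$, output $U\cup\{ch,h\}$. - $ch(h)?x$: result unchanged, output $U\cup\{ch,h,x\}$. - $\alpha\cup\beta$: result $\sigma^{U,\Pi}(\alpha)\cup\sigma^{U,\Pi}(\beta)$, output $V_1\cup V_2$ (the respective outputs). - $\alpha;\beta$: result $\sigma^{U,\Pi}(\alpha);\sigma^{V_1,\Pi}(\beta)$, where $V_1$ is the output of the first; the output is the output $V_2$ of the second. - $\alpha^*$: let $V$ be the output of $\sigma^{U,\Pi}(\alpha)$ (which must be defined); result $(\sigma^{V,\Pi}(\alpha))^*$, output $V$. - $\alpha\parallel\beta$: result $\sigma^{U,\Pi_\beta}(\alpha)\parallel\sigma^{U,\Pi_\alpha}(\beta)$ with outputs $V_1,V_2$; the output is $V_1\cup V_2$. Here $\Pi_\gamma=(\Pi\cup BV(\sigma^{U,\Pi}(\gamma)))\setminus(\{\mu,\mu'\}\cup\mathcal V_{\mathcal T})$. Adjoint interpretation. For an interpretation $I$ and a state $w$, the interpretation $\sigma^*_wI$ agrees with $I$ except: - $(\sigma^*_wI)(f)$ is the map $d\mapsto I[\cdot\mapsto d]\,w[\![\sigma f(\cdot)]\!]$; - $(\sigma^*_wI)(p)=\{d: I[\cdot\mapsto d],w\models\sigma p(\cdot)\}$; - $(\sigma^*_wI)(a^{\bar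 z}_{\bar{ch}})=[\![\sigma a]\!]^I$. Here $I[\cdot\mapsto d]$ interprets the nullary symbol $\cdot$ as $d$. Variation. For $U\subseteq\mathcal V\cup\Omega$, a state $v$ is a $U$-variation of a state $w$ iff $v\downarrow(U^\complement\cap\Omega)=w\downarrow(U^\complement\cap\Omega)$ on $U^\complement\cap\mathcal V$. *)

(* Defs.v *)
From Stdlib Require Import Reals List QArith Qreals Sorted ClassicalDescription.
From Coquelicot Require Import Coquelicot.
Import ListNotations.
Open Scope R_scope.

Definition chan := nat.

Inductive rvar : Type := RBase : nat -> rvar | RDiff : rvar -> rvar.

Definition rvar_eq_dec : forall x y : rvar, {x = y} + {x <> y}.
Proof. decide equality; apply Nat.eq_dec. Defined.

(* designated global time mu and its differential symbol mu' *)
Definition dmu : rvar := RBase 0.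
Definition dmu' : rvar := RDiff dmu.

Inductive var : Type := VarR (x : rvar) | VarN (n : nat) | VarT (h : nat).

Inductive sym : Type := SVar (z : var) | SChan (c : chan).
Definition symset := sym -> Prop.
Definition sunion (A B : symset) : symset := fun y => A y \/ B y.

(* finite (fc_co = false) or cofinite (fc_co = true) sets, as in the syntax *)
Record fcset (A : Type) := FC { fc_co : bool; fc_list : list A }.
Arguments FC {A}.
Arguments fc_co {A}.
Arguments fc_list {A}.
Definition fc_mem {A} (S : fcset A) (x : A) : Prop :=
  if fc_co S then ~ In x (fc_list S) else In x (fc_list S).

Definition fc_inter (S T : fcset chan) : fcset chan :=
  match fc_co S, fc_co T with
  | false, false => FC false (filter (fun c => existsb (Nat.eqb c) (fc_list T)) (fc_list S))
  | false, true => FC false (filter (fun c => negb (existsb (Nat.eqb c) (fc_list T))) (fc_list S))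
  | true, false => FC false (filter (fun c => negb (existsb (Nat.eqb c) (fc_list S))) (fc_list T))
  | true, true => FC true (fc_list S ++ fc_list T)
  end.

Inductive sort : Type := SR | SN | SC | ST.
Definition sort_eq_dec : forall a b : sort, {a = b} + {a <> b}.
Proof. decide equality. Defined.

Record event := Ev { ev_ch : chan; ev_val : R; ev_time : R }.
Definition trace := list event.

(* recorded events: tagged with a trace variable *)
Record revent := REv { re_tag : nat; re_ch : chan; re_val : R; re_time : R }.
Definition rtrace := list revent.

Definition sval (s : sort) : Type :=
  match s with SR => R | SN => nat | SC => chan | ST => trace end.

(* function symbols (one argument, cf. f(ch, e) in the substitution
   clauses); fs_prog: usable inside programs *)
Record fsym := FSym { fs_name : nat; fs_arg : sort; fs_res : sort; fs_prog : bool }.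
Record psym := PSym { ps_name : nat; ps_arg : sort; ps_prog : bool }.
Record pconst := PCst { pc_name : nat; pc_vars : fcset var; pc_chans : fcset chan }.

Inductive term : sort -> Type :=
| TRVar : rvar -> term SR
| TNVar : nat -> term SN
| TTVar : nat -> term ST
| TFun (f : fsym) : fcset chan -> term (fs_arg f) -> term (fs_res f)
| TDot (s : sort) : term s                      (* reserved nullary symbol . *)
| TRat : Q -> term SR
| TPlus : term SR -> term SR -> term SR
| TTimes : term SR -> term SR -> term SR
| TDiff : term SR -> term SR
| TVal : term ST -> term SR
| TTime : term ST -> term SR
| TNum : nat -> term SN
| TNPlus : term SN -> term SN -> term SN
| TLen : term ST -> term SN
| TChan : term ST -> term SC
| TEvent : chan -> term SR -> term SR -> term ST
| TCat : term ST -> term ST -> term ST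
| TProj : term ST -> fcset chan -> term ST
| TAt : term ST -> term SN -> term ST.

Inductive fml : Type :=
| FEq (s : sort) : term s -> term s -> fml
| FGeR : term SR -> term SR -> fml
| FGeN : term SN -> term SN -> fml
| FPref : term ST -> term ST -> fml
| FPred (p : psym) : fcset chan -> term (ps_arg p) -> fml
| FNot : fml -> fml
| FAnd : fml -> fml -> fml
| FForall : var -> fml -> fml
| FBox : prog -> fml -> fml
| FAC : prog -> fml -> fml -> fml -> fml
with prog : Type :=
| PConst : pconst -> prog
| PAssign : rvar -> term SR -> prog
| PRand : rvar -> prog
| PTest : fml -> prog
| PODE : rvar -> term SR -> fml -> prog
| PSeq : prog -> prog -> prog
| PChoice : prog -> prog -> prog
| PStar : prog -> prog
| PSend : chan -> nat -> term SR -> prog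
| PRecv : chan -> nat -> rvar -> prog
| PPar : prog -> prog -> prog.

Record state := St { sR : rvar -> R; sN : nat -> nat; sT : nat -> trace }.

Inductive vval : Type := VVR (r : R) | VVN (n : nat) | VVT (t : trace).
Definition sget (v : state) (z : var) : vval :=
  match z with VarR x => VVR (sR v x) | VarN n => VVN (sN v n) | VarT h => VVT (sT v h) end.

Definition agree (S : var -> Prop) (v w : state) : Prop :=
  forall z, S z -> sget v z = sget w z.

Definition updR (v : state) (x : rvar) (r : R) : state :=
  St (fun y => if rvar_eq_dec y x then r else sR v y) (sN v) (sT v).
Definition updN (v : state) (n : nat) (k : nat) : state :=
  St (sR v) (fun m => if Nat.eq_dec m n then k else sN v m) (sT v).
Definition updT (v : state) (h : nat) (t : trace) : state :=
  St (sR v) (sN v) (fun g => if Nat.eq_dec g h then t else sT v g).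

(* classical decision, used for projections onto arbitrary channel sets *)
Definition pdec (P : Prop) : bool :=
  if excluded_middle_informative P then true else false.

Definition tproj (C : chan -> Prop) (t : trace) : trace :=
  filter (fun e => pdec (C (ev_ch e))) t.
Definition rproj (C : chan -> Prop) (t : rtrace) : rtrace :=
  filter (fun e => pdec (C (re_ch e))) t.
Definition sproj (v : state) (C : chan -> Prop) : state :=
  St (sR v) (sN v) (fun h => tproj C (sT v h)).

Definition strip (e : revent) : event := Ev (re_ch e) (re_val e) (re_time e).
Definition sapp (v : state) (t : rtrace) : state :=
  St (sR v) (sN v)
     (fun h => sT v h ++ map strip (filter (fun e => Nat.eqb (re_tag e) h) t)).

Definition tprefix {A} (t1 t2 : list A) : Prop := exists t3, t2 = t1 ++ t3.
Definition sprefix {A} (t1 t2 : list A) : Prop := tprefix t1 t2 /\ t1 <> t2.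
Definition oprefix (t1 : rtrace) (o1 : option state) (t2 : rtrace) (o2 : option state) : Prop :=
  (o1 = None /\ tprefix t1 t2) \/ (t1 = t2 /\ o1 = o2).

Definition cmp := state -> rtrace -> option state -> Prop.

Record interp := Interp {
  I_f : forall f : fsym, sval (fs_arg f) -> sval (fs_res f);
  I_p : forall p : psym, sval (ps_arg p) -> Prop;
  I_a : pconst -> cmp;
  I_dot : forall s : sort, sval s }.

Fixpoint rvars_of {s} (e : term s) : list rvar :=
  match e with
  | TRVar x => [x]
  | TFun _ _ a => rvars_of a
  | TPlus a b | TTimes a b => rvars_of a ++ rvars_of b
  | TDiff a => rvars_of a
  | TVal a | TTime a | TLen a | TChan a => rvars_of a
  | TNPlus a b => rvars_of a ++ rvars_of b
  | TEvent _ a b => rvars_of a ++ rvars_of b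
  | TCat a b => rvars_of a ++ rvars_of b
  | TProj a _ => rvars_of a
  | TAt a b => rvars_of a ++ rvars_of b
  | _ => []
  end.

Fixpoint teval (I : interp) (v : state) {s} (e : term s) {struct e} : sval s :=
  match e in term s return sval s with
  | TRVar x => sR v x
  | TNVar n => sN v n
  | TTVar h => sT v h
  | TFun f chs a => I_f I f (teval I (sproj v (fc_mem chs)) a)
  | TDot s => I_dot I s
  | TRat q => Q2R q
  | TPlus a b => teval I v a + teval I v b
  | TTimes a b => teval I v a * teval I v b
  | TDiff a =>
      fold_right
        (fun x acc => sR v (RDiff x) * Derive (fun r => teval I (updR v x r) a) (sR v x) + acc)
        0 (nodup rvar_eq_dec (rvars_of a))
  | TVal a => match teval I v a with ev :: _ => ev_val ev | [] => 0 end
  | TTime a => match teval I v a with ev :: _ => ev_time ev | [] => 0 end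
  | TNum n => n
  | TNPlus a b => (teval I v a + teval I v b)%nat
  | TLen a => length (teval I v a)
  | TChan a => match teval I v a with ev :: _ => ev_ch ev | [] => 0%nat end
  | TEvent c a b => [Ev c (teval I v a) (teval I v b)]
  | TCat a b => teval I v a ++ teval I v b
  | TProj a C => tproj (fc_mem C) (teval I v a)
  | TAt a i => match nth_error (teval I v a) (teval I v i) with
               | Some ev => [ev] | None => [] end
  end.

Definition smoothR (g : R -> R) : Prop := forall (n : nat) (x : R), ex_derive_n g n x.

Definition chrono (v : state) (t : rtrace) (o : option state) : Prop :=
  Sorted Rle (map re_time t) /\ List.Forall (fun e => sR v dmu <= re_time e) t /\
  (forall w, o = Some w -> sR v dmu <= sR w dmu /\ List.Forall (fun e => re_time e <= sR w dmu) t).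

(* variables a program constant may bind: zbar, which is a subset of V_R u V_T *)
Definition pc_binds (a : pconst) (z : var) : Prop :=
  fc_mem (pc_vars a) z /\ forall n, z <> VarN n.

Definition interp_ok (I : interp) : Prop :=
  (forall f : fsym,
      match fs_arg f as s1, fs_res f as s2 return (sval s1 -> sval s2) -> Prop with
      | SR, SR => fun g => smoothR g
      | _, _ => fun _ => True
      end (I_f I f)) /\
  (forall a : pconst,
      (forall v, I_a I a v [] None) /\
      (forall v t o t' o', I_a I a v t o -> oprefix t' o' t o -> I_a I a v t' o') /\
      (forall v t o, I_a I a v t o ->
         chrono v t o /\
         rproj (fun c => ~ fc_mem (pc_chans a) c) t = [] /\
         (forall w, o = Some w ->
            agree (fun z => exists h, z = VarT h) v w /\
            agree (fun z => ~ pc_binds a z) (sapp w t) v))).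

Definition BVs (S : interp -> cmp) : var -> Prop :=
  fun z => exists I v t w, interp_ok I /\ S I v t (Some w) /\ sget (sapp w t) z <> sget v z.

Definition CNs (S : interp -> cmp) : chan -> Prop :=
  fun c => exists I v t o, interp_ok I /\ S I v t o /\ rproj (fun c' => c' = c) t <> [].

Definition comm_of (S : interp -> cmp) (e : revent) : Prop :=
  CNs S (re_ch e) /\ BVs S (VarT (re_tag e)).

Definition smerge (B : var -> Prop) (o1 o2 : option state) : option state :=
  match o1, o2 with
  | Some w1, Some w2 =>
      Some (St (fun x => if pdec (B (VarR x)) then sR w1 x else sR w2 x)
               (fun n => if pdec (B (VarN n)) then sN w1 n else sN w2 n)
               (fun h => if pdec (B (VarT h)) then sT w1 h else sT w2 h))
  | _, _ => None
  end.

Definition par_sem (S1 S2 : interp -> cmp) (I : interp) : cmp :=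
  fun v t o => exists o1 o2,
    S1 I v (filter (fun e => pdec (comm_of S1 e)) t) o1 /\
    S2 I v (filter (fun e => pdec (comm_of S2 e)) t) o2 /\
    (forall w1 w2, o1 = Some w1 -> o2 = Some w2 -> sR w1 dmu = sR w2 dmu) /\
    List.Forall (fun e => comm_of S1 e \/ comm_of S2 e) t /\
    o = smerge (BVs S1) o1 o2.

Definition seq_sem (S1 S2 : cmp) : cmp :=
  fun v t o =>
    (o = None /\ exists w, S1 v t w) \/
    (exists t1 t2 u, t = t1 ++ t2 /\ S1 v t1 (Some u) /\ S2 u t2 o).

Definition test_true : cmp := fun v t o => t = [] /\ (o = None \/ o = Some v).

Fixpoint iter_sem (n : nat) (S : cmp) : cmp :=
  match n with O => test_true | S n' => seq_sem S (iter_sem n' S) end.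

Definition ode_sol (I : interp) (x : rvar) (eta : term SR) (chi : state -> Prop)
    (v w : state) : Prop :=
  exists (s : R) (phi : R -> state),
    0 <= s /\ phi s = w /\
    agree (fun z => z <> VarR (RDiff x) /\ z <> VarR dmu') (phi 0) v /\
    (forall t, 0 <= t <= s ->
       agree (fun z => z <> VarR x /\ z <> VarR (RDiff x) /\ z <> VarR dmu /\ z <> VarR dmu')
             (phi t) v /\
       chi (phi t) /\
       sR (phi t) (RDiff x) = teval I (phi t) eta /\
       sR (phi t) dmu' = 1 /\
       filterdiff (fun r : R => sR (phi r) x) (within (fun r => 0 <= r <= s) (locally t))
                  (fun h : R => scal h (sR (phi t) (RDiff x))) /\
       filterdiff (fun r : R => sR (phi r) dmu) (within (fun r => 0 <= r <= s) (locally t))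
                  (fun h : R => scal h (sR (phi t) dmu'))).

Fixpoint fsem (phi : fml) (I : interp) (v : state) {struct phi} : Prop :=
  match phi with
  | FEq _ a b => teval I v a = teval I v b
  | FGeR a b => teval I v a >= teval I v b
  | FGeN a b => (teval I v b <= teval I v a)%nat
  | FPref a b => tprefix (teval I v a) (teval I v b)
  | FPred p chs a => I_p I p (teval I (sproj v (fc_mem chs)) a)
  | FNot q => ~ fsem q I v
  | FAnd a b => fsem a I v /\ fsem b I v
  | FForall z q =>
      match z with
      | VarR x => forall r : R, fsem q I (updR v x r)
      | VarN n => forall k : nat, fsem q I (updN v n k)
      | VarT h => forall t : trace, fsem q I (updT v h t)
      end
  | FBox a q => forall t w, psem a I v t (Some w) -> fsem q I (sapp w t)
  | FAC a A C q => forall t o, psem a I v t o ->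
      ((forall s, sprefix s t -> fsem A I (sapp v s)) -> fsem C I (sapp v t)) /\
      ((forall s, tprefix s t -> fsem A I (sapp v s)) ->
         forall w, o = Some w -> fsem q I (sapp w t))
  end
with psem (a : prog) {struct a} : interp -> cmp :=
  match a with
  | PConst c => fun I => I_a I c
  | PAssign x eta => fun I v t o =>
      t = [] /\ (o = None \/ o = Some (updR v x (teval I v eta)))
  | PRand x => fun I v t o =>
      t = [] /\ (o = None \/ exists r, o = Some (updR v x r))
  | PTest chi => fun I v t o =>
      t = [] /\ (o = None \/ (o = Some v /\ fsem chi I v))
  | PODE x eta chi => fun I v t o =>
      t = [] /\ (o = None \/ exists w, o = Some w /\ ode_sol I x eta (fun u => fsem chi I u) v w)
  | PSeq a1 a2 => fun I => seq_sem (psem a1 I) (psem a2 I)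
  | PChoice a1 a2 => fun I v t o => psem a1 I v t o \/ psem a2 I v t o
  | PStar a1 => fun I v t o => exists n, iter_sem n (psem a1 I) v t o
  | PSend c h eta => fun I v t o =>
      oprefix t o [REv h c (teval I v eta) (sR v dmu)] (Some v)
  | PRecv c h x => fun I v t o =>
      exists d, oprefix t o [REv h c d (sR v dmu)] (Some (updR v x d))
  | PPar a1 a2 => fun I => par_sem (psem a1) (psem a2) I
  end.

Definition BVp (a : prog) : var -> Prop := BVs (psem a).
Definition CNp (a : prog) : chan -> Prop := CNs (psem a).

Definition FVt {s} (e : term s) : var -> Prop :=
  fun z => exists I v v', interp_ok I /\ agree (fun y => y <> z) v v' /\
                          teval I v e <> teval I v' e.
Definition CNt {s} (e : term s) : chan -> Prop :=
  fun c => exists I v v', interp_ok I /\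
    agree (fun _ => True) (sproj v (fun c' => c' <> c)) (sproj v' (fun c' => c' <> c)) /\
    teval I v e <> teval I v' e.
Definition FVf (q : fml) : var -> Prop :=
  fun z => exists I v v', interp_ok I /\ agree (fun y => y <> z) v v' /\
                          ~ (fsem q I v <-> fsem q I v').
Definition CNf (q : fml) : chan -> Prop :=
  fun c => exists I v v', interp_ok I /\
    agree (fun _ => True) (sproj v (fun c' => c' <> c)) (sproj v' (fun c' => c' <> c)) /\
    ~ (fsem q I v <-> fsem q I v').

Definition symFVCNt {s} (e : term s) : symset :=
  fun y => match y with SVar z => FVt e z | SChan c => CNt e c end.
Definition symFVCNf (q : fml) : symset :=
  fun y => match y with SVar z => FVf q z | SChan c => CNf q c end.
Definition symBVCNp (a : prog) : symset :=
  fun y => match y with SVar z => BVp a z | SChan c => CNp a c end.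
Definition symBVp (a : prog) : symset :=
  fun y => match y with SVar z => BVp a z | SChan _ => False end.

Fixpoint tpush (C : fcset chan) {s} (e : term s) {struct e} : term s :=
  match e in term s return term s with
  | TRVar x => TRVar x
  | TNVar n => TNVar n
  | TTVar h => TProj (TTVar h) C
  | TFun f chs a => TFun f (fc_inter chs C) a
  | TDot s => TDot s
  | TRat q => TRat q
  | TPlus a b => TPlus (tpush C a) (tpush C b)
  | TTimes a b => TTimes (tpush C a) (tpush C b)
  | TDiff a => TDiff (tpush C a)
  | TVal a => TVal (tpush C a)
  | TTime a => TTime (tpush C a)
  | TNum n => TNum n
  | TNPlus a b => TNPlus (tpush C a) (tpush C b)
  | TLen a => TLen (tpush C a)
  | TChan a => TChan (tpush C a)
  | TEvent c a b => TEvent c (tpush C a) (tpush C b)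
  | TCat a b => TCat (tpush C a) (tpush C b)
  | TProj a D => TProj (tpush C a) D
  | TAt a i => TAt (tpush C a) (tpush C i)
  end.

Fixpoint trepl {s0} (d : term s0) {s} (e : term s) {struct e} : term s :=
  match e in term s return term s with
  | TRVar x => TRVar x
  | TNVar n => TNVar n
  | TTVar h => TTVar h
  | TFun f chs a => TFun f chs (trepl d a)
  | TDot s' => match sort_eq_dec s0 s' with
               | left H => eq_rect s0 term d s' H
               | right _ => TDot s'
               end
  | TRat q => TRat q
  | TPlus a b => TPlus (trepl d a) (trepl d b)
  | TTimes a b => TTimes (trepl d a) (trepl d b)
  | TDiff a => TDiff (trepl d a)
  | TVal a => TVal (trepl d a)
  | TTime a => TTime (trepl d a)
  | TNum n => TNum n
  | TNPlus a b => TNPlus (trepl d a) (trepl d b)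
  | TLen a => TLen (trepl d a)
  | TChan a => TChan (trepl d a)
  | TEvent c a b => TEvent c (trepl d a) (trepl d b)
  | TCat a b => TCat (trepl d a) (trepl d b)
  | TProj a D => TProj (trepl d a) D
  | TAt a i => TAt (trepl d a) (trepl d i)
  end.

Fixpoint frepl {s0} (d : term s0) (q : fml) {struct q} : fml :=
  match q with
  | FEq _ a b => FEq _ (trepl d a) (trepl d b)
  | FGeR a b => FGeR (trepl d a) (trepl d b)
  | FGeN a b => FGeN (trepl d a) (trepl d b)
  | FPref a b => FPref (trepl d a) (trepl d b)
  | FPred p chs a => FPred p chs (trepl d a)
  | FNot q1 => FNot (frepl d q1)
  | FAnd q1 q2 => FAnd (frepl d q1) (frepl d q2)
  | FForall z q1 => FForall z (frepl d q1)
  | FBox a q1 => FBox (prepl d a) (frepl d q1)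
  | FAC a A C q1 => FAC (prepl d a) (frepl d A) (frepl d C) (frepl d q1)
  end
with prepl {s0} (d : term s0) (a : prog) {struct a} : prog :=
  match a with
  | PConst c => PConst c
  | PAssign x eta => PAssign x (trepl d eta)
  | PRand x => PRand x
  | PTest chi => PTest (frepl d chi)
  | PODE x eta chi => PODE x (trepl d eta) (frepl d chi)
  | PSeq a1 a2 => PSeq (prepl d a1) (prepl d a2)
  | PChoice a1 a2 => PChoice (prepl d a1) (prepl d a2)
  | PStar a1 => PStar (prepl d a1)
  | PSend c h eta => PSend c h (trepl d eta)
  | PRecv c h x => PRecv c h x
  | PPar a1 a2 => PPar (prepl d a1) (prepl d a2)
  end.

Record usubst := US {
  us_f : forall f : fsym, option (term (fs_res f)); (* sigma f(.), . = TDot (fs_arg f) *)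
  us_p : psym -> option fml;                           (* sigma p(.), . = TDot (ps_arg p) *)
  us_a : pconst -> option prog }.

Definition sig_a (sg : usubst) (a : pconst) : prog :=
  match us_a sg a with Some b => b | None => PConst a end.

Definition pi_ctx (Pi : symset) (g : prog) : symset :=
  fun y => (Pi y \/ symBVp g y) /\ y <> SVar (VarR dmu) /\ y <> SVar (VarR dmu') /\
           forall h, y <> SVar (VarT h).

(* usT sg U s e e' : sigma^U(e) is defined and equals e' *)
Inductive usT (sg : usubst) : symset -> forall s, term s -> term s -> Prop :=
| usT_RVar U x : usT sg U SR (TRVar x) (TRVar x)
| usT_NVar U n : usT sg U SN (TNVar n) (TNVar n)
| usT_TVar U h : usT sg U ST (TTVar h) (TTVar h)
| usT_FunNone U f chs a a' :
    us_f sg f = None -> usT sg U (fs_arg f) a a' ->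
    usT sg U (fs_res f) (TFun f chs a) (TFun f chs a')
| usT_FunSome U f chs a a' t :
    us_f sg f = Some t -> usT sg U (fs_arg f) (tpush chs a) a' ->
    (forall y, symFVCNt t y -> ~ U y) ->
    usT sg U (fs_res f) (TFun f chs a) (trepl a' t)
| usT_Dot U s : usT sg U s (TDot s) (TDot s)
| usT_Rat U q : usT sg U SR (TRat q) (TRat q)
| usT_Plus U a b a' b' : usT sg U SR a a' -> usT sg U SR b b' ->
    usT sg U SR (TPlus a b) (TPlus a' b')
| usT_Times U a b a' b' : usT sg U SR a a' -> usT sg U SR b b' ->
    usT sg U SR (TTimes a b) (TTimes a' b')
| usT_Diff U a a' : usT sg (fun _ => True) SR a a' -> usT sg U SR (TDiff a) (TDiff a')
| usT_Val U a a' : usT sg U ST a a' -> usT sg U SR (TVal a) (TVal a')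
| usT_Time U a a' : usT sg U ST a a' -> usT sg U SR (TTime a) (TTime a')
| usT_Num U n : usT sg U SN (TNum n) (TNum n)
| usT_NPlus U a b a' b' : usT sg U SN a a' -> usT sg U SN b b' ->
    usT sg U SN (TNPlus a b) (TNPlus a' b')
| usT_Len U a a' : usT sg U ST a a' -> usT sg U SN (TLen a) (TLen a')
| usT_Chan U a a' : usT sg U ST a a' -> usT sg U SC (TChan a) (TChan a')
| usT_Event U c a b a' b' : usT sg U SR a a' -> usT sg U SR b b' ->
    usT sg U ST (TEvent c a b) (TEvent c a' b')
| usT_Cat U a b a' b' : usT sg U ST a a' -> usT sg U ST b b' ->
    usT sg U ST (TCat a b) (TCat a' b')
| usT_Proj U a a' C : usT sg U ST a a' -> usT sg U ST (TProj a C) (TProj a' C)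
| usT_At U a i a' i' : usT sg U ST a a' -> usT sg U SN i i' ->
    usT sg U ST (TAt a i) (TAt a' i').

(* usF sg U phi phi' : sigma^U(phi) is defined and equals phi';
   usP sg U Pi a a' V : sigma^{U,Pi}(a) is defined, equals a', with output taboo V *)
Inductive usF (sg : usubst) : symset -> fml -> fml -> Prop :=
| usF_Eq U s a b a' b' : usT sg U s a a' -> usT sg U s b b' ->
    usF sg U (FEq s a b) (FEq s a' b')
| usF_GeR U a b a' b' : usT sg U SR a a' -> usT sg U SR b b' ->
    usF sg U (FGeR a b) (FGeR a' b')
| usF_GeN U a b a' b' : usT sg U SN a a' -> usT sg U SN b b' ->
    usF sg U (FGeN a b) (FGeN a' b')
| usF_Pref U a b a' b' : usT sg U ST a a' -> usT sg U ST b b' ->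
    usF sg U (FPref a b) (FPref a' b')
| usF_PredNone U p chs a a' :
    us_p sg p = None -> usT sg U (ps_arg p) a a' ->
    usF sg U (FPred p chs a) (FPred p chs a')
| usF_PredSome U p chs a a' q :
    us_p sg p = Some q -> usT sg U (ps_arg p) (tpush chs a) a' ->
    (forall y, symFVCNf q y -> ~ U y) ->
    usF sg U (FPred p chs a) (frepl a' q)
| usF_Not U q q' : usF sg U q q' -> usF sg U (FNot q) (FNot q')
| usF_And U q1 q2 q1' q2' : usF sg U q1 q1' -> usF sg U q2 q2' ->
    usF sg U (FAnd q1 q2) (FAnd q1' q2')
| usF_Forall U z q q' : usF sg (sunion U (fun y => y = SVar z)) q q' ->
    usF sg U (FForall z q) (FForall z q')
| usF_Box U a a' V q q' : usP sg U (fun _ => False) a a' V -> usF sg V q q' ->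
    usF sg U (FBox a q) (FBox a' q')
| usF_AC U a a' V A A' C C' q q' : usP sg U (fun _ => False) a a' V ->
    usF sg V A A' -> usF sg V C C' -> usF sg V q q' ->
    usF sg U (FAC a A C q) (FAC a' A' C' q')
with usP (sg : usubst) : symset -> symset -> prog -> prog -> symset -> Prop :=
| usP_Const U Pi c :
    (forall z, BVp (sig_a sg c) z -> fc_mem (pc_vars c) z) ->
    (forall ch, CNp (sig_a sg c) ch -> fc_mem (pc_chans c) ch) ->
    usP sg U Pi (PConst c) (sig_a sg c) (sunion U (symBVCNp (sig_a sg c)))
| usP_Assign U Pi x eta eta' : usT sg (sunion U Pi) SR eta eta' ->
    usP sg U Pi (PAssign x eta) (PAssign x eta') (sunion U (fun y => y = SVar (VarR x)))
| usP_Rand U Pi x :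
    usP sg U Pi (PRand x) (PRand x) (sunion U (fun y => y = SVar (VarR x)))
| usP_Test U Pi chi chi' : usF sg (sunion U Pi) chi chi' ->
    usP sg U Pi (PTest chi) (PTest chi') U
| usP_ODE U Pi x eta eta' chi chi' :
    usT sg (sunion U Pi) SR eta eta' -> usF sg (sunion U Pi) chi chi' ->
    usP sg U Pi (PODE x eta chi) (PODE x eta' chi')
        (sunion U (fun y => y = SVar (VarR x) \/ y = SVar (VarR (RDiff x)) \/
                            y = SVar (VarR dmu) \/ y = SVar (VarR dmu')))
| usP_Send U Pi c h eta eta' : usT sg (sunion U Pi) SR eta eta' ->
    usP sg U Pi (PSend c h eta) (PSend c h eta')
        (sunion U (fun y => y = SChan c \/ y = SVar (VarT h)))
| usP_Recv U Pi c h x :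
    usP sg U Pi (PRecv c h x) (PRecv c h x)
        (sunion U (fun y => y = SChan c \/ y = SVar (VarT h) \/ y = SVar (VarR x)))
| usP_Choice U Pi a b a' b' V1 V2 :
    usP sg U Pi a a' V1 -> usP sg U Pi b b' V2 ->
    usP sg U Pi (PChoice a b) (PChoice a' b') (sunion V1 V2)
| usP_Seq U Pi a b a' b' V1 V2 :
    usP sg U Pi a a' V1 -> usP sg V1 Pi b b' V2 ->
    usP sg U Pi (PSeq a b) (PSeq a' b') V2
| usP_Star U Pi a a1 V a2 V2 :
    usP sg U Pi a a1 V -> usP sg V Pi a a2 V2 ->
    usP sg U Pi (PStar a) (PStar a2) V
| usP_Par U Pi a b ar Var br Vbr a' b' V1 V2 :
    usP sg U Pi a ar Var -> usP sg U Pi b br Vbr ->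
    usP sg U (pi_ctx Pi br) a a' V1 -> usP sg U (pi_ctx Pi ar) b b' V2 ->
    usP sg U Pi (PPar a b) (PPar a' b') (sunion V1 V2).

Definition set_dot (I : interp) (s : sort) (d : sval s) : interp :=
  Interp (I_f I) (I_p I) (I_a I)
    (fun s' => match sort_eq_dec s s' with
               | left H => eq_rect s sval d s' H
               | right _ => I_dot I s'
               end).

Definition adjoint (sg : usubst) (w : state) (I : interp) : interp :=
  Interp
    (fun f => match us_f sg f with
              | Some t => fun d => teval (set_dot I (fs_arg f) d) w t
              | None => I_f I f
              end)
    (fun p => match us_p sg p with
              | Some q => fun d => fsem q (set_dot I (ps_arg p) d) w
              | None => I_p I p
              end)
    (fun c => match us_a sg c with
              | Some b => psem b I
              | None => I_a I c
              end)
    (I_dot I).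

Definition variation (U : symset) (v w : state) : Prop :=
  agree (fun z => ~ U (SVar z))
        (sproj v (fun c => ~ U (SChan c))) (sproj w (fun c => ~ U (SChan c))).

(* polynomials with rational coefficients in real variables and program
   function symbols; dotok: the reserved symbol . may occur *)
Fixpoint is_poly (dotok : bool) {s} (e : term s) : Prop :=
  match e with
  | TRVar _ => True
  | TRat _ => True
  | TDot s' => dotok = true /\ s' = SR
  | TPlus a b | TTimes a b => is_poly dotok a /\ is_poly dotok b
  | TFun f _ a => fs_prog f = true /\ fs_arg f = SR /\ fs_res f = SR /\ is_poly dotok a
  | _ => False
  end.

Fixpoint is_folra (dotok : bool) (q : fml) : Prop :=
  match q with
  | FEq s a b => s = SR /\ is_poly dotok a /\ is_poly dotok b
  | FGeR a b => is_poly dotok a /\ is_poly dotok b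
  | FPred p _ a => ps_prog p = true /\ ps_arg p = SR /\ is_poly dotok a
  | FNot q1 => is_folra dotok q1
  | FAnd q1 q2 => is_folra dotok q1 /\ is_folra dotok q2
  | FForall z q1 => (exists x, z = VarR x) /\ is_folra dotok q1
  | _ => False
  end.

Fixpoint wf_term (dotok : bool) {s} (e : term s) : Prop :=
  match e with
  | TDot _ => dotok = true
  | TFun _ _ a => wf_term dotok a
  | TPlus a b | TTimes a b => wf_term dotok a /\ wf_term dotok b
  | TDiff a => is_poly dotok a
  | TVal a | TTime a | TLen a | TChan a => wf_term dotok a
  | TNPlus a b => wf_term dotok a /\ wf_term dotok b
  | TEvent _ a b => is_poly dotok a /\ is_poly dotok b
  | TCat a b => wf_term dotok a /\ wf_term dotok b
  | TProj a _ => wf_term dotok a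
  | TAt a i => wf_term dotok a /\ wf_term dotok i
  | _ => True
  end.

Fixpoint wf_prog (dotok : bool) (a : prog) : Prop :=
  match a with
  | PConst _ => True
  | PAssign _ eta => is_poly dotok eta
  | PRand _ => True
  | PTest chi => is_folra dotok chi
  | PODE _ eta chi => is_poly dotok eta /\ is_folra dotok chi
  | PSeq a1 a2 | PChoice a1 a2 => wf_prog dotok a1 /\ wf_prog dotok a2
  | PStar a1 => wf_prog dotok a1
  | PSend _ _ eta => is_poly dotok eta
  | PRecv _ _ _ => True
  | PPar a1 a2 => wf_prog dotok a1 /\ wf_prog dotok a2 /\
      (forall z, BVp a1 z -> BVp a2 z ->
         z = VarR dmu \/ z = VarR dmu' \/ exists h, z = VarT h)
  end.

Fixpoint wf_fml (dotok : bool) (q : fml) : Prop :=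
  match q with
  | FEq _ a b | FGeR a b | FGeN a b | FPref a b => wf_term dotok a /\ wf_term dotok b
  | FPred _ _ a => wf_term dotok a
  | FNot q1 => wf_fml dotok q1
  | FAnd q1 q2 => wf_fml dotok q1 /\ wf_fml dotok q2
  | FForall _ q1 => wf_fml dotok q1
  | FBox a q1 => wf_prog dotok a /\ wf_fml dotok q1
  | FAC a A C q1 => wf_prog dotok a /\ wf_fml dotok A /\ wf_fml dotok C /\ wf_fml dotok q1 /\
      (forall z, (FVf A z \/ FVf C z) -> BVp a z -> exists h, z = VarT h)
  end.

Definition us_ok (sg : usubst) : Prop :=
  (forall f t, us_f sg f = Some t -> wf_term true t /\ (fs_prog f = true -> is_poly true t)) /\
  (forall p q, us_p sg p = Some q -> wf_fml true q /\ (ps_prog p = true -> is_folra true q)) /\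
  (forall c b, us_a sg c = Some b -> wf_prog false b).

(* Main.v *)
Require Import Defs.
From Stdlib Require Import Reals Lra List Classical ClassicalDescription.
Import ListNotations.

Definition Pfr (V : symset) (v : state) (t : rtrace) (o : state) : Prop :=
 (forall x, ~ V (SVar (VarR x)) -> sR o x = sR v x) /\
 (forall n, ~ V (SVar (VarN n)) -> sN o n = sN v n) /\
 (forall h, ~ V (SVar (VarT h)) -> filter (fun e => Nat.eqb (re_tag e) h) t = []).

Lemma pdec_true (P : Prop) : P -> pdec P = true.
Proof. intros HP. unfold pdec. destruct (excluded_middle_informative P); tauto. Qed.

Lemma filter_nil_iff {A} (f : A -> bool) l :
  filter f l = [] <-> forall e, In e l -> f e = false.
Proof.
  induction l as [|a l IH]; simpl; split; auto.
  - intros _ e [].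
  - destruct (f a) eqn:E; intros H; [discriminate|].
    intros e [<-|He]; auto. apply IH; auto.
  - intros H. rewrite (H a (or_introl eq_refl)). apply IH. auto.
Qed.

Lemma Pfr_comp V1 V2 v t1 u t2 o :
  Pfr V1 v t1 u -> Pfr V2 u t2 o -> (forall y, V1 y -> V2 y) -> Pfr V2 v (t1 ++ t2) o.
Proof.
  intros [A1 [B1 C1]] [A2 [B2 C2]] Hs. repeat split.
  - intros x Hx. rewrite A2, A1; auto.
  - intros n Hn. rewrite B2, B1; auto.
  - intros h Hh. rewrite filter_app, C1, C2; auto.
Qed.

Lemma usP_mono sg U Pi a a' V : usP sg U Pi a a' V -> forall y, U y -> V y.
Proof.
  induction 1; intros y Hy; unfold sunion in *; auto.
Qed.

Lemma tpres (K : interp)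
  (HK : forall c v tr w, I_a K c v tr (Some w) -> forall h, sT w h = sT v h) :
  forall a v t o, psem a K v t (Some o) -> forall h, sT o h = sT v h.
Proof.
  induction a as [c|x e|x|chi|x e chi|a1 IHa1 a2 IHa2|a1 IHa1 a2 IHa2|a1 IHa|c hh e|c hh x|a1 IHa1 a2 IHa2];
    intros v t o H h; simpl in H.
  - eapply HK; eauto.
  - destruct H as [_ [H|H]]; inversion H; subst; reflexivity.
  - destruct H as [_ [H|[r H]]]; inversion H; subst; reflexivity.
  - destruct H as [_ [H|[H _]]]; inversion H; subst; reflexivity.
  - destruct H as [_ [H|[w0 [H Hs]]]]; inversion H; subst.
    destruct Hs as [s [phi [Hs0 [Hps [_ Hall]]]]].
    destruct (Hall s) as [Ha _]. lra.
    specialize (Ha (VarT h)). simpl in Ha. rewrite <- Hps.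
    assert (E : VVT (sT (phi s) h) = VVT (sT v h)) by (apply Ha; repeat split; discriminate).
    inversion E; auto.
  - destruct H as [[H _]|[t1 [t2 [u [_ [H1 H2]]]]]]; [discriminate|].
    rewrite (IHa2 _ _ _ H2), (IHa1 _ _ _ H1); auto.
  - destruct H as [H|H]; eauto.
  - destruct H as [n H]. revert v t o H. induction n; intros v t o H; simpl in H.
    + destruct H as [_ [H|H]]; inversion H; subst; reflexivity.
    + destruct H as [[H _]|[t1 [t2 [u [_ [H1 H2]]]]]]; [discriminate|].
      rewrite (IHn _ _ _ H2), (IHa _ _ _ H1); auto.
  - destruct H as [[H _]|[_ H]]; [discriminate|]. inversion H; subst; reflexivity.
  - destruct H as [d [[H _]|[_ H]]]; [discriminate|]. inversion H; subst; reflexivity.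
  - destruct H as [o1 [o2 [Ha [Hb [_ [_ Ho]]]]]].
    destruct o1 as [w1|]; destruct o2 as [w2|]; simpl in Ho; try discriminate.
    inversion Ho; subst; simpl. destruct (pdec _).
    + eapply IHa1; eauto.
    + eapply IHa2; eauto.
Qed.

Lemma ok_tpres I : interp_ok I ->
  forall c v tr w', I_a I c v tr (Some w') -> forall h, sT w' h = sT v h.
Proof.
  intros [_ HA] c v tr w' H h.
  destruct (HA c) as [_ [_ H3]].
  destruct (H3 _ _ _ H) as [_ [_ H4]].
  destruct (H4 w' eq_refl) as [Hag _].
  assert (E := Hag (VarT h) (ex_intro _ h eq_refl)). simpl in E. inversion E; auto.
Qed.

Lemma adj_tpres sg w I : interp_ok I ->
  forall c v tr w', I_a (adjoint sg w I) c v tr (Some w') -> forall h, sT w' h = sT v h.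
Proof.
  intros HI c v tr w' H. simpl in H. destruct (us_a sg c) as [b|].
  - eapply tpres; [|exact H]. apply ok_tpres; auto.
  - eapply ok_tpres; eauto.
Qed.

Lemma core sg I w (HI : interp_ok I) : forall U Pi a a' V, usP sg U Pi a a' V ->
  forall v t o, psem a (adjoint sg w I) v t (Some o) -> Pfr V v t o.
Proof.
  induction 1; intros v t o Hp; simpl in Hp.
  -
    assert (Hb : psem (sig_a sg c) I v t (Some o)).
    { unfold sig_a. destruct (us_a sg c) eqn:E; simpl; auto. }
    assert (Hz : forall z, ~ BVp (sig_a sg c) z -> sget (sapp o t) z = sget v z).
    { intros z Hz. apply NNPP. intro Hn. apply Hz. exists I, v, t, o. auto. }
    assert (Ht : forall h, sT o h = sT v h).
    { eapply tpres; [|exact Hb]. apply ok_tpres; auto. }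
    repeat split.
    + intros x Hx. assert (E := Hz (VarR x) (fun Hc => Hx (or_intror Hc))).
      simpl in E. inversion E; auto.
    + intros x Hx. assert (E := Hz (VarN x) (fun Hc => Hx (or_intror Hc))).
      simpl in E. inversion E; auto.
    + intros h Hh. assert (E := Hz (VarT h) (fun Hc => Hh (or_intror Hc))).
      simpl in E. inversion E as [E2]. rewrite Ht in E2.
      rewrite <- (app_nil_r (sT v h)) in E2 at 2.
      apply app_inv_head in E2. apply map_eq_nil in E2. exact E2.
  -
    destruct Hp as [-> [Hp|Hp]]; inversion Hp; subst. repeat split; simpl; auto.
    intros y Hy. destruct (rvar_eq_dec y x); subst; auto.
    exfalso; apply Hy; right; reflexivity.
  - destruct Hp as [-> [Hp|[r Hp]]]; inversion Hp; subst. repeat split; simpl; auto.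
    intros y Hy. destruct (rvar_eq_dec y x); subst; auto.
    exfalso; apply Hy; right; reflexivity.
  - destruct Hp as [-> [Hp|[Hp _]]]; inversion Hp; subst. repeat split; auto.
  - destruct Hp as [-> [Hp|[w0 [Hp Hs]]]]; inversion Hp; subst.
    destruct Hs as [s [phi [Hs0 [Hps [_ Hall]]]]].
    destruct (Hall s) as [Ha _]. lra. subst.
    repeat split; auto.
    + intros y Hy.
      assert (E : sget (phi s) (VarR y) = sget v (VarR y)).
      { apply Ha. unfold sunion in Hy. repeat split; intro Hc; inversion Hc; subst; apply Hy; right; auto. }
      simpl in E. inversion E; auto.
    + intros y Hy.
      assert (E : sget (phi s) (VarN y) = sget v (VarN y)) by (apply Ha; repeat split; discriminate).
      simpl in E. inversion E; auto.
  -
    destruct Hp as [[Hp _]|[Ht Hp]]; [discriminate|]. inversion Hp; subst.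
    repeat split; auto. intros h' Hh'. simpl.
    destruct (Nat.eqb h h') eqn:E; auto. apply Nat.eqb_eq in E; subst.
    exfalso; apply Hh'; right; auto.
  - destruct Hp as [d [[Hp _]|[Ht Hp]]]; [discriminate|]. inversion Hp; subst.
    repeat split; simpl; auto.
    + intros y Hy. destruct (rvar_eq_dec y x); subst; auto.
      exfalso; apply Hy; right; auto.
    + intros h' Hh'. destruct (Nat.eqb h h') eqn:E; auto. apply Nat.eqb_eq in E; subst.
      exfalso; apply Hh'; right; auto.
  -
    destruct Hp as [Hp|Hp]; [destruct (IHusP1 _ _ _ Hp) as [A [B C]]|destruct (IHusP2 _ _ _ Hp) as [A [B C]]];
      repeat split; intros; unfold sunion in *; auto.
  -
    destruct Hp as [[Hp _]|[t1 [t2 [u [-> [H1 H2]]]]]]; [discriminate|].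
    eapply Pfr_comp; eauto. eapply usP_mono; eauto.
  -
    destruct Hp as [n Hp]. revert v t o Hp. induction n; intros v t o Hp; simpl in Hp.
    + destruct Hp as [-> [Hp|Hp]]; inversion Hp; subst. repeat split; auto.
    + destruct Hp as [[Hp _]|[t1 [t2 [u [-> [H1 H2]]]]]]; [discriminate|].
      eapply Pfr_comp; eauto.
  -
    destruct Hp as [o1 [o2 [Ha [Hb [_ [Hall Ho]]]]]].
    destruct o1 as [w1|]; destruct o2 as [w2|]; simpl in Ho; try discriminate.
    inversion Ho; subst; clear Ho.
    destruct (IHusP3 _ _ _ Ha) as [A1 [B1 C1]].
    destruct (IHusP4 _ _ _ Hb) as [A2 [B2 C2]].
    unfold sunion in *. repeat split; simpl.
    + intros x Hx. destruct (pdec _); [apply A1|apply A2]; tauto.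
    + intros x Hx. destruct (pdec _); [apply B1|apply B2]; tauto.
    + intros h Hh. apply filter_nil_iff. intros e He.
      destruct (Nat.eqb (re_tag e) h) eqn:E; auto. exfalso.
      rewrite Forall_forall in Hall. destruct (Hall e He) as [Hc|Hc].
      * assert (F := C1 h (fun Hc' => Hh (or_introl Hc'))).
        rewrite filter_nil_iff in F. rewrite F in E; [discriminate|].
        apply filter_In. split; auto. apply pdec_true; auto.
      * assert (F := C2 h (fun Hc' => Hh (or_intror Hc'))).
        rewrite filter_nil_iff in F. rewrite F in E; [discriminate|].
        apply filter_In. split; auto. apply pdec_true; auto.
Qed.

Lemma pdec_true_inv (P : Prop) : pdec P = true -> P.
Proof. unfold pdec. destruct (excluded_middle_informative P); auto; discriminate. Qed.

Lemma tproj_sub (C D : chan -> Prop) l :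
  (forall c, C c -> D c) -> tproj C (tproj D l) = tproj C l.
Proof.
  intros Hs. unfold tproj. induction l as [|e l IH]; auto.
  simpl. destruct (pdec (D (ev_ch e))) eqn:ED.
  - simpl. destruct (pdec (C (ev_ch e))); rewrite IH; auto.
  - destruct (pdec (C (ev_ch e))) eqn:EC; auto.
    apply pdec_true_inv in EC. rewrite (pdec_true _ (Hs _ EC)) in ED. discriminate.
Qed.

Theorem mainTheorem8 (sg : usubst) (alpha : prog) (U : symset) (I : interp) (w : state)
    (alpha' : prog) (V : symset) (v : state) (tau : rtrace) (o : state) :
  us_ok sg -> wf_prog false alpha -> interp_ok I ->
  usP sg U (fun _ => False) alpha alpha' V ->
  variation U v w ->
  psem alpha (adjoint sg w I) v tau (Some o) ->
  variation V (sapp o tau) w.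
Proof.
  intros _ _ HI Hus Hvar Hp.
  destruct (core sg I w HI _ _ _ _ _ Hus _ _ _ Hp) as [A [B C]].
  assert (Ht := tpres _ (adj_tpres sg w I HI) _ _ _ _ Hp).
  assert (Hm := usP_mono _ _ _ _ _ _ Hus).
  unfold variation, agree in *. intros z Hz.
  assert (HzU : ~ U (SVar z)) by auto.
  specialize (Hvar z HzU).
  destruct z as [x|n|h]; simpl in *.
  - rewrite A; auto.
  - rewrite B; auto.
  - rewrite C, app_nil_r, Ht; auto. inversion Hvar as [E].
    rewrite <- (tproj_sub (fun c => ~ V (SChan c)) (fun c => ~ U (SChan c)) (sT v h)) by auto.
    rewrite E. apply f_equal. apply tproj_sub. auto.
Qed.
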